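(* Let $1\le M\le N$ and let $\mathbf{B}=[\mathbf{b}_1,\dots,\mathbf{b}_M]$ be a complex $N\times M$ matrix with linearly independent columns and orthogonality defect $$\delta=\frac{\|\mathbf{b}_1\|^2\|\mathbf{b}_2\|^2\cdots\|\mathbf{b}_M\|^2}{\det(\mathbf{B}^{\mathtt{H}}\mathbf{B})}.$$ Let $\mathbf{B}^{-\mathtt{H}}=[\mathbf{a}_1,\dots,\mathbf{a}_M]$ denote the Hermitian of the inverse of $\mathbf{B}$ (of its pseudo-inverse if $M<N$), i.e. $\mathbf{B}^{-\mathtt{H}}=\mathbf{B}(\mathbf{B}^{\mathtt{H}}\mathbf{B})^{-1}$. Then $$\max\{\|\mathbf{b}_1\|,\dots,\|\mathbf{b}_M\|\}\le\frac{\sqrt{\delta}}{\min\{\|\mathbf{a}_1\|,\dots,\|\mathbf{a}_M\|\}}$$ and $$\max\{\|\mathbf{a}_1\|,\dots,\|\mathbf{a}_M\|\}\le\frac{\sqrt{\delta}}{\min\{\|\mathbf{b}_1\|,\dots,\|\mathbf{b}_M\|\}}.$$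
   Context: $(\cdot)^{\mathtt{H}}$ denotes the conjugate transpose, and $\|\cdot\|$ the Euclidean norm on $\mathbb{C}^N$. *)

(* Defs.v *)
From HB Require Import structures.
From mathcomp Require Import all_boot all_order all_algebra.
From mathcomp Require Import reals.
From mathcomp.real_closed Require Import complex.
Set Implicit Arguments. Unset Strict Implicit. Unset Printing Implicit Defensive.
Import Order.TTheory GRing.Theory Num.Theory.
Local Open Scope ring_scope.

Definition herm (R : realType) (m n : nat) (A : 'M[R[i]]_(m, n)) : 'M[R[i]]_(n, m) :=
  (map_mx Num.conj A)^T.

Definition vnorm (R : realType) (N : nat) (v : 'cV[R[i]]_N) : R :=
  Num.sqrt (\sum_(i < N) ((complex.Re (v i 0)) ^+ 2 + (complex.Im (v i 0)) ^+ 2)).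

(* max of the column norms (norms are >= 0, so 0 is a neutral seed) *)
Definition colnorm_max (R : realType) (N M : nat) (B : 'M[R[i]]_(N, M)) : R :=
  \big[Num.max/0]_(j < M) vnorm (col j B).

(* min of the column norms (seeded with the max, an element of the set when M >= 1) *)
Definition colnorm_min (R : realType) (N M : nat) (B : 'M[R[i]]_(N, M)) : R :=
  \big[Num.min/colnorm_max B]_(j < M) vnorm (col j B).

(* orthogonality defect: prod ||b_j||^2 / det(B^H B)  (the determinant is real positive;
   we take its real part to divide in R) *)
Definition orth_defect (R : realType) (N M : nat) (B : 'M[R[i]]_(N, M)) : R :=
  (\prod_(j < M) vnorm (col j B) ^+ 2) / complex.Re (\det (herm B *m B)).

Definition dualB (R : realType) (N M : nat) (B : 'M[R[i]]_(N, M)) : 'M[R[i]]_(N, M) :=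
  B *m invmx (herm B *m B).

(* Main.v *)
Require Import Defs.
From HB Require Import structures.
From mathcomp Require Import all_boot all_order all_algebra.
From mathcomp Require Import reals.
From mathcomp.real_closed Require Import complex.
Import Order.TTheory GRing.Theory Num.Theory.
Set Implicit Arguments. Unset Strict Implicit. Unset Printing Implicit Defensive.
Local Open Scope ring_scope.

Section Aux.
Variable R : realType.
Local Notation C := (R[i]).
Local Notation RC x := (real_complex R x).

Definition nsq n (v : 'cV[C]_n) : R :=
  \sum_(i < n) ((complex.Re (v i 0)) ^+ 2 + (complex.Im (v i 0)) ^+ 2).

Lemma nsq_ge0 n (v : 'cV[C]_n) : 0 <= nsq v.
Proof. by apply: sumr_ge0 => i _; rewrite addr_ge0 ?sqr_ge0. Qed.

Lemma vnormE n (v : 'cV[C]_n) : vnorm v = Num.sqrt (nsq v).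
Proof. by []. Qed.

Lemma herm_mul m n p (A : 'M[C]_(m, n)) (B : 'M[C]_(n, p)) :
  herm (A *m B) = herm B *m herm A.
Proof. by rewrite /herm map_mxM trmx_mul. Qed.

Lemma hermK m n (A : 'M[C]_(m, n)) : herm (herm A) = A.
Proof. by apply/matrixP => i j; rewrite /herm !mxE conjCK. Qed.

Lemma herm0 m n : herm (0 : 'M[C]_(m, n)) = 0.
Proof. by apply/matrixP => i j; rewrite /herm !mxE conjC0. Qed.

Lemma cJc (z : C) : Num.conj z * z = RC (complex.Re z ^+ 2 + complex.Im z ^+ 2).
Proof. by rewrite add_Re2_Im2 normCK mulrC. Qed.

Lemma herm_vv n (v : 'cV[C]_n) : (herm v *m v) 0 0 = RC (nsq v).
Proof.
rewrite mxE /nsq rmorph_sum; apply: eq_bigr => i _.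
by rewrite /herm !mxE; apply: cJc.
Qed.

Lemma herm_entry m n (A : 'M[C]_(m, n)) i j :
  (herm A *m A) i j = (herm (col i A) *m col j A) 0 0.
Proof. by rewrite !mxE; apply: eq_bigr => k _; rewrite /herm !mxE. Qed.

Lemma nsq_eq0 n (v : 'cV[C]_n) : nsq v = 0 -> v = 0.
Proof.
move=> h; apply/matrixP => i j; rewrite (ord1 j) mxE.
have := @psumr_eq0P _ _ _ _ (fun i _ => addr_ge0 (sqr_ge0 _) (sqr_ge0 _)) h i isT.
move=> /(congr1 (real_complex R)); rewrite add_Re2_Im2 rmorph0.
by move/eqP; rewrite sqrf_eq0 normr_eq0 => /eqP.
Qed.


Lemma hermD m n (A B : 'M[C]_(m, n)) : herm (A + B) = herm A + herm B.
Proof. by apply/matrixP => i j; rewrite /herm !mxE rmorphD. Qed.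

Lemma herm_row m n1 n2 (A : 'M[C]_(m, n1)) (B : 'M[C]_(m, n2)) :
  herm (row_mx A B) = col_mx (herm A) (herm B).
Proof. by rewrite /herm map_row_mx tr_row_mx. Qed.

Lemma schur_step N k (c : 'cV[C]_N) (C1 : 'M[C]_(N, k)) :
  (forall x : 'cV_(1 + k), row_mx c C1 *m x = 0 -> x = 0) ->
  herm C1 *m C1 \in unitmx ->
  exists c' : 'cV[C]_N,
    \det (herm (row_mx c C1) *m row_mx c C1) = RC (nsq c') * \det (herm C1 *m C1)
    /\ 0 < nsq c' /\ nsq c' <= nsq c.
Proof.
move=> inj uK.
pose x := invmx (herm C1 *m C1) *m (herm C1 *m c).
pose c' := c - C1 *m x.
have hC1c' : herm C1 *m c' = 0.
  by rewrite /c' mulmxBr /x !mulmxA mulmxV // mul1mx subrr.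
have hc'C1 : herm c' *m C1 = 0.
  have -> : herm c' *m C1 = herm (herm C1 *m c') by rewrite herm_mul hermK.
  by rewrite hC1c' herm0.
exists c'; split; last split.
- pose U : 'M[C]_(1 + k) := block_mx 1 0 (- x) 1.
  have AU : row_mx c C1 *m U = row_mx c' C1.
    by rewrite mul_row_block !mulmx1 !mulmx0 add0r mulmxN.
  have dU : \det U = 1 by rewrite det_lblock !det1 mulr1.
  have dhU : \det (herm U) = 1 by rewrite /herm det_tr det_map_mx dU rmorph1.
  have <- : \det (herm (row_mx c' C1) *m row_mx c' C1)
        = \det (herm (row_mx c C1) *m row_mx c C1).
    rewrite -AU herm_mul.
    have -> : herm U *m herm (row_mx c C1) *m (row_mx c C1 *m U)
       = herm U *m (herm (row_mx c C1) *m row_mx c C1) *m U by rewrite !mulmxA.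
    by rewrite !det_mulmx dU dhU mul1r mulr1.
  rewrite herm_row mul_col_row hC1c' hc'C1 det_lblock det_mx11 herm_vv.
  done.
- rewrite lt_def nsq_ge0 andbT; apply/eqP => /nsq_eq0 h0.
  have : row_mx c C1 *m col_mx 1 (- x) = 0.
    by rewrite mul_row_col mulmx1 mulmxN; exact: h0.
  by move/inj/eqP; rewrite col_mx_eq0 oner_eq0.
- have e : c = c' + C1 *m x by rewrite /c' subrK.
  clearbody c' x.
  have : RC (nsq c) = RC (nsq c') + RC (nsq (C1 *m x)).
    rewrite -!herm_vv.
    have -> : herm c *m c = herm c' *m c' + herm (C1 *m x) *m (C1 *m x).
      rewrite {1 2}e hermD mulmxDl !mulmxDr mulmxA hc'C1 mul0mx addr0.
      have -> : herm (C1 *m x) *m c' = 0 by rewrite herm_mul -mulmxA hC1c' mulmx0.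
      by rewrite add0r.
    by rewrite mxE.
  rewrite -rmorphD => /complexI ->.
  by rewrite lerDl nsq_ge0.
Qed.


Lemma hadamard N k : forall (A : 'M[C]_(N, k)),
  (forall x : 'cV_k, A *m x = 0 -> x = 0) ->
  exists r : R, \det (herm A *m A) = RC r /\ 0 < r /\ r <= \prod_(j < k) nsq (col j A).
Proof.
elim: k => [|k IH] A inj.
  by exists 1; split; [rewrite det_mx00 rmorph1 | rewrite ltr01 big_ord0].
pose c : 'cV[C]_N := lsubmx (A : 'M_(N, 1 + k)).
pose C1 : 'M[C]_(N, k) := rsubmx (A : 'M_(N, 1 + k)).
have eA : A = row_mx c C1 by rewrite hsubmxK.
have inj1 : forall y : 'cV_k, C1 *m y = 0 -> y = 0.
  move=> y hy; have : A *m (col_mx (0 : 'cV_1) y : 'cV_(k.+1)) = 0.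
    by have := mul_row_col c C1 0 y; rewrite mulmx0 add0r hy eA; apply.
  move/inj => h; have := congr1 (fun z : 'cV_(1 + k) => dsubmx z) h.
  by rewrite /= col_mxKd => ->; apply/matrixP => i j; rewrite !mxE.
have [r [dr [r0 rle]]] := IH C1 inj1.
have uK : herm C1 *m C1 \in unitmx.
  rewrite unitmxE dr unitfE; apply/eqP => /(congr1 (@complex.Re R)) /= h.
  by move: r0; rewrite h ltxx.
have inj' : forall x : 'cV_(1 + k), row_mx c C1 *m x = 0 -> x = 0 by rewrite -eA.
have [c' [dA [c0 cle]]] := schur_step inj' uK.
exists (nsq c' * r); split; [|split].
- by rewrite eA dA dr rmorphM.
- by rewrite mulr_gt0.
- rewrite big_ord_recl.
  have -> : col ord0 A = c.
    apply/matrixP => i j; rewrite mxE (ord1 j) eA.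
    have -> : (ord0 : 'I_(k.+1)) = lshift k (ord0 : 'I_1) by apply: val_inj.
    exact: (row_mxEl c C1 i ord0).
  have -> : \prod_(i < k) nsq (col (lift ord0 i) A) = \prod_(i < k) nsq (col i C1).
    apply: eq_bigr => j _; congr nsq; apply/matrixP => i l; rewrite !mxE eA.
    have -> : lift ord0 j = rshift 1 j by apply: val_inj.
    done.
  by rewrite ler_pM // ?nsq_ge0 ?ltW.
Qed.


Lemma inj_of_rank N M (B : 'M[C]_(N, M)) : \rank B = M ->
  forall x : 'cV_M, B *m x = 0 -> x = 0.
Proof.
move=> hB x hx.
have rf : row_free B^T by rewrite /row_free mxrank_tr hB.
apply: trmx_inj; apply: (row_free_inj rf) => /=.
by rewrite -trmx_mul hx !trmx0 mul0mx.
Qed.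

Lemma col'_inj N M (B : 'M[C]_(N, M.+1)) (j : 'I_M.+1) :
  (forall x : 'cV_M.+1, B *m x = 0 -> x = 0) ->
  forall x : 'cV_M, col' j B *m x = 0 -> x = 0.
Proof.
move=> inj x hx.
pose x' : 'cV_(M.+1) := \col_i (if unlift j i is Some k then x k 0 else 0).
have e : B *m x' = col' j B *m x.
  apply/matrixP => r l; rewrite !mxE (bigD1_ord j) //= mxE unlift_none mulr0 add0r.
  by apply: eq_bigr => k _; rewrite /x' !mxE liftK (ord1 l).
have := inj x'; rewrite e hx => /(_ erefl) h.
apply/matrixP => k l; rewrite (ord1 l).
by have := congr1 (fun z : 'cV_M.+1 => z (lift j k) 0) h; rewrite /= !mxE liftK.
Qed.

Lemma invmx_jj n (G : 'M[C]_n.+1) (j : 'I_n.+1) : G \in unitmx ->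
  invmx G j j = (\det G)^-1 * \det (row' j (col' j G)).
Proof.
move=> uG; rewrite /invmx uG !mxE /cofactor -signr_odd addnn odd_double expr0.
by rewrite mul1r.
Qed.

Lemma minor_eq N M (B : 'M[C]_(N, M.+1)) (j : 'I_M.+1) :
  row' j (col' j (herm B *m B)) = herm (col' j B) *m col' j B.
Proof.
by apply/matrixP => a b; rewrite !mxE; apply: eq_bigr => k _; rewrite /herm !mxE.
Qed.

Lemma herm_dual N M (B : 'M[C]_(N, M)) : herm B *m B \in unitmx ->
  herm (dualB B) *m dualB B = invmx (herm B *m B).
Proof.
move=> uG.
have hG : herm (herm B *m B) = herm B *m B by rewrite herm_mul hermK.
have hK : herm (invmx (herm B *m B)) = invmx (herm B *m B).
  by rewrite {1}/herm map_invmx trmx_inv -/(herm _) hG.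
rewrite /dualB herm_mul hK.
have -> : invmx (herm B *m B) *m herm B *m (B *m invmx (herm B *m B))
   = invmx (herm B *m B) *m (herm B *m B) *m invmx (herm B *m B) by rewrite !mulmxA.
by rewrite mulVmx // mul1mx.
Qed.

Lemma key N M (B : 'M[C]_(N, M.+1)) (j : 'I_M.+1) :
  (forall x : 'cV_M.+1, B *m x = 0 -> x = 0) ->
  [/\ nsq (col j B) * nsq (col j (dualB B)) <= orth_defect B,
      0 < nsq (col j (dualB B)) & 0 < nsq (col j B)].
Proof.
move=> inj.
have [d [dd [d0 dle]]] := hadamard inj.
have [r [dr [r0 rle]]] := hadamard (@col'_inj _ _ B j inj).
have uG : herm B *m B \in unitmx.
  rewrite unitmxE dd unitfE; apply/eqP => /(congr1 (@complex.Re R)) /= h.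
  by move: d0; rewrite h ltxx.
have ea : RC (nsq (col j (dualB B))) = RC (r / d).
  rewrite -herm_vv -herm_entry herm_dual // invmx_jj // minor_eq dd dr.
  by rewrite rmorphM fmorphV mulrC.
have {}ea := complexI ea.
have prodE : \prod_(k < M.+1) nsq (col k B)
    = nsq (col j B) * \prod_(k < M) nsq (col k (col' j B)).
  rewrite (bigD1_ord j) //=; congr (_ * _); apply: eq_bigr => k _.
  by congr nsq; apply/matrixP => a b; rewrite !mxE.
have od : orth_defect B = (\prod_(k < M.+1) nsq (col k B)) / d.
  rewrite /orth_defect dd /=; congr (_ / _); apply: eq_bigr => k _.
  by rewrite vnormE sqr_sqrtr ?nsq_ge0.
split.
- rewrite od prodE ea mulrA; apply: ler_wpM2r; first by rewrite invr_ge0 ltW.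
  by apply: ler_wpM2l; [exact: nsq_ge0 | exact: rle].
- by rewrite ea divr_gt0.
- rewrite lt_def nsq_ge0 andbT; apply/eqP => h; move: dle.
  by rewrite prodE h mul0r => /(lt_le_trans d0); rewrite ltxx.
Qed.

Lemma maxmin n (f g : 'I_n.+1 -> R) s :
  (forall j, 0 < f j) -> (forall j, 0 < g j) -> (forall j, f j * g j <= s) ->
  \big[Num.max/0]_(j < n.+1) f j <=
    s / \big[Num.min/(\big[Num.max/0]_(j < n.+1) g j)]_(j < n.+1) g j.
Proof.
move=> fp gp fg.
set m := \big[Num.min/_]_(j < _) _.
have mle : forall j, m <= g j.
  by move=> j; rewrite /m (bigD1 j) //= ge_min lexx.
have m0 : 0 < m.
  rewrite /m; apply: (big_ind (fun y => 0 < y)).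
  - by rewrite (bigD1 ord0) //= lt_max gp.
  - by move=> a b ha hb; rewrite lt_min ha hb.
  - by move=> i _; exact: gp.
have s0 : 0 <= s by apply: le_trans (fg ord0); rewrite ltW // mulr_gt0.
apply: (big_ind (fun y => y <= s / m)).
- by rewrite divr_ge0 // ltW.
- by move=> a b ha hb; rewrite ge_max ha hb.
- move=> i _; rewrite ler_pdivlMr //; apply: le_trans (fg i).
  by rewrite ler_wpM2l // ltW.
Qed.

End Aux.

Theorem lemma1 (R : realType) (N M : nat) (hM : (1 <= M)%N) (hMN : (M <= N)%N)
  (B : 'M[R[i]]_(N, M)) (hB : \rank B = M) :
  colnorm_max B <= Num.sqrt (orth_defect B) / colnorm_min (dualB B) /\
  colnorm_max (dualB B) <= Num.sqrt (orth_defect B) / colnorm_min B.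
Proof.
case: M hM hMN B hB => // M _ _ B hB.
have inj := inj_of_rank hB.
have K j := key j inj.
have hfg : forall j, vnorm (col j B) * vnorm (col j (dualB B)) <= Num.sqrt (orth_defect B).
  move=> j; have [h1 _ _] := K j.
  by rewrite !vnormE -sqrtrM ?nsq_ge0 // ler_wsqrtr.
have pa : forall j, 0 < vnorm (col j (dualB B)).
  by move=> j; have [_ h _] := K j; rewrite vnormE sqrtr_gt0.
have pb : forall j, 0 < vnorm (col j B).
  by move=> j; have [_ _ h] := K j; rewrite vnormE sqrtr_gt0.
rewrite /colnorm_max /colnorm_min; split.
- exact: maxmin.
- by apply: maxmin => // j; rewrite mulrC.
Qed.
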